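(* Let $\beta_1,\dots,\beta_N\in\mathbb R$ with $\beta_a\beta_b\ne0$ for some $a,b$. Then $\widetilde C_\beta$ is an orthogonal projection if and only if $(d-1)\sum_{i=1}^N\beta_i^2+\big(\sum_{i=1}^N\beta_i\big)^2=1$. If this condition holds, then $C_\beta\ge0$ and $\mathrm{Tr}_{\{1,\dots,N\}}C_\beta=I$, so $C_\beta$ is the Choi matrix of a quantum channel $\mathcal M_d\to\mathcal M_d^{\otimes N}$.
   Context: Fix $d\ge2$, $N\ge1$. Tensor factors of $(\mathbb C^d)^{\otimes(N+1)}$ are labelled $0,\dots,N$. For a permutation $\sigma$ of $\{0,\dots,N\}$, $\Pi_\sigma(v_0\otimes\cdots\otimes v_N)=v_{\sigma^{-1}(0)}\otimes\cdots\otimes v_{\sigma^{-1}(N)}$ and $\Pi_\sigma^\Gamma$ is its partial transpose on factor $0$ in the standard basis. For $1\le a,b\le N$, $\Sigma_{a,b}=\{\sigma:\sigma(0)=a,\sigma(b)=0\}$. Define $\widetilde C_\beta=\sum_{1\le a,b\le N}\sum_{\sigma\in\Sigma_{a,b}}\frac{\beta_a\beta_b}{(N-1)!}\Pi_\sigma^\Gamma$ and $C_\beta=\frac{d}{\binom{N+d-1}{N}}\frac{N+d-1}{N}\widetilde C_\beta$. A matrix $C$ is the Choi matrix of a quantum channel iff $C\ge0$ and its partial trace over factors $1,\dots,N$ is $I$ (factor $0$ being the input). *)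

(* Defs.v *)
From HB Require Import structures.
From mathcomp Require Import all_boot all_order all_algebra all_fingroup.
Set Implicit Arguments. Unset Strict Implicit. Unset Printing Implicit Defensive.
Import Order.TTheory GRing.Theory Num.Theory.
Local Open Scope ring_scope.

(* Complex scalars: any numClosedFieldType C (e.g. the complex numbers).
   Basis of (C^d)^{\otimes(N+1)}: functions x : 'I_(N.+1) -> 'I_d
   (x k = basis index in tensor factor k; factor 0 is ord0).
   Operators are matrices indexed by the ranks of these basis labels. *)

Section Defs.
Variables (C : numClosedFieldType) (d N : nat).

Definition lbl := {ffun 'I_N.+1 -> 'I_d}.
Definition dim := #|{: lbl}|.
Definition op := 'M[C]_dim.

Definition mkop (f : lbl -> lbl -> C) : op :=
  \matrix_(i, j) f (enum_val i) (enum_val j).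
Definition ent (M : op) (x y : lbl) : C := M (enum_rank x) (enum_rank y).

(* Pi_sigma (v_0 ⊗ ... ⊗ v_N) = v_{sigma^-1 0} ⊗ ... ⊗ v_{sigma^-1 N},
   so <x|Pi_sigma|y> = [forall k, x k = y (sigma^-1 k)] *)
Definition Pi (s : 'S_N.+1) : op :=
  mkop (fun x y => (x == [ffun k => y ((s^-1)%g k)])%:R).

Definition upd0 (x : lbl) (i : 'I_d) : lbl :=
  [ffun k => if k == ord0 then i else x k].

Definition ptrans0 (M : op) : op :=
  mkop (fun x y => ent M (upd0 x (y ord0)) (upd0 y (x ord0))).

(* Sigma_{a,b} = {sigma : sigma 0 = a, sigma b = 0}, with a,b in {1..N}
   represented as lift ord0 a', lift ord0 b' for a',b' : 'I_N *)
Definition Ctilde (beta : 'I_N -> C) : op :=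
  \sum_(a < N) \sum_(b < N)
    \sum_(s : 'S_N.+1 | (s ord0 == lift ord0 a) && (s (lift ord0 b) == ord0))
      ((beta a * beta b) / (N.-1)`!%:R) *: ptrans0 (Pi s).

Definition Cbeta (beta : 'I_N -> C) : op :=
  (d%:R / 'C(N + d - 1, N)%:R * ((N + d - 1)%:R / N%:R)) *: Ctilde beta.

Definition adj (M : op) : op := map_mx Num.conj (M^T).

Definition is_orth_proj (P : op) : Prop := P *m P = P /\ adj P = P.

Definition psd (M : op) : Prop :=
  forall v : 'cV[C]_dim, 0 <= ((map_mx Num.conj v^T) *m M *m v) 0 0.

Definition ptrace_rest (M : op) : 'M[C]_d :=
  \matrix_(i, j) \sum_(x : lbl | x ord0 == i) ent M x (upd0 x j).

(* Choi matrix of a quantum channel (factor 0 = input) *)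
Definition is_choi_channel (M : op) : Prop :=
  psd M /\ ptrace_rest M = 1%:M.

End Defs.

(* Main.v *)
Require Import Defs.
From HB Require Import structures.
From mathcomp Require Import all_boot all_order all_algebra all_fingroup.
From mathcomp Require Import ring zify.
Import Order.TTheory GRing.Theory Num.Theory.
Set Implicit Arguments. Unset Strict Implicit. Unset Printing Implicit Defensive.

Section Count.
Variables (T : finType) (n : nat) (A : {set T}) (z : {ffun T -> 'I_n.+1}).
Local Notation F := {ffun T -> 'I_n.+1}.

Definition actf (x : F) (r : {perm T}) : F := [ffun t => x ((r^-1)%g t)].
Lemma actf1 : actf^~ 1%g =1 id.
Proof. by move=> x; apply/ffunP=> t; rewrite ffunE invg1 perm1. Qed.
Lemma actfM x : act_morph actf x.
Proof. by move=> a b; apply/ffunP=> t; rewrite !ffunE invMg permM. Qed.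
Definition actA := TotalAction actf1 actfM.

Definition Xs : {set F} := [set x : F | [forall t, (t \notin A) ==> (x t == z t)]].

Lemma acts_Sym : [acts Sym A, on Xs | actA].
Proof.
apply/actsP => r; rewrite inE => rA x; rewrite !inE /=.
apply: eq_forallb => t; case: (boolP (t \in A)) => //= tA.
by rewrite ffunE (out_perm (perm_onV rA) tA).
Qed.

Lemma card_setb (U : finType) (G : {set U}) (Q : pred U) :
  #|[set r in G | Q r]| = (\sum_(r in G) (Q r : nat))%N.
Proof.
rewrite -sum1_card big_mkcond /= [RHS]big_mkcond /=.
by apply: eq_bigr => r _; rewrite inE; case: (r \in G); case: (Q r).
Qed.

Lemma count_fix1 :
  (\sum_(x in Xs) #|[set r in Sym A | actf x r == x]|)%N
  = (#|orbit actA (Sym A) @: Xs| * #|A|`!)%N.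
Proof.
rewrite -card_Sym -Frobenius_Cauchy; last exact: acts_Sym.
rewrite (eq_bigr (fun x => \sum_(r in Sym A) ((actf x r == x) : nat))%N); last by move=> x _; rewrite card_setb.
rewrite exchange_big /=; apply: eq_bigr => r _.
rewrite -sum1_card big_mkcond /= [RHS]big_mkcond /=.
apply: eq_bigr => x _; rewrite !inE sub1set inE.
by case: [forall _, _] => //=; case: (_ == x).
Qed.

Definition rle : rel 'I_n.+1 := fun a b => (a <= b)%N.
Lemma rle_total : total rle. Proof. by move=> a b; apply: leq_total. Qed.
Lemma rle_trans : transitive rle. Proof. by move=> a b c; apply: leq_trans. Qed.
Lemma rle_anti : antisymmetric rle.
Proof. by rewrite /rle => a b /andP[h1 h2]; apply: val_inj; apply/eqP; rewrite eqn_leq h1 h2. Qed.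

Definition eA := enum_tuple A.
Lemma size_srt (x : F) : size (sort rle (map_tuple x eA)) == #|A|.
Proof. by rewrite size_sort size_tuple. Qed.
Definition tsrt (x : F) : #|A|.-tuple 'I_n.+1 := Tuple (size_srt x).

Lemma tsrt_act x r : r \in Sym A -> tsrt (actf x r) = tsrt x.
Proof.
rewrite inE => rA; apply: val_inj => /=; apply/perm_sortP.
- exact: rle_total. - exact: rle_trans. - exact: rle_anti.
have -> : map (actf x r) eA = map x (map (r^-1)%g eA).
  by rewrite -map_comp; apply: eq_map => t; rewrite /= ffunE.
apply: perm_map; apply: uniq_perm.
- by rewrite map_inj_uniq ?enum_uniq //; apply: perm_inj.
- exact: enum_uniq.
move=> t; apply/mapP/idP => [[u]|tA].
  by rewrite !mem_enum => uA ->; rewrite perm_closed //; apply: perm_onV.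
exists (r t); last by rewrite permK.
by rewrite -[_ \in eA]/(r t \in enum A) mem_enum perm_closed // -mem_enum.
Qed.

Lemma size_eA : size eA = #|A|. Proof. exact: size_tuple. Qed.


Lemma idx_spec t : t \in A -> exists i, insub (index t eA) = Some i /\ t = tnth eA i.
Proof.
move=> tA; have hi : (index t eA < #|A|)%N by rewrite -{2}size_eA index_mem mem_enum.
exists (Ordinal hi); split; first by rewrite insubT; congr Some; apply: val_inj.
by rewrite (tnth_nth t) /= nth_index // mem_enum.
Qed.

Lemma idx_out t : t \notin A -> insub (index t eA) = None :> option 'I_#|A|.
Proof.
move=> tA; rewrite insubF //; apply/negbTE; rewrite -leqNgt -{1}size_eA.
by rewrite memNindex ?mem_enum.
Qed.

Lemma idx_tnth i : insub (index (tnth eA i) eA) = Some i.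
Proof.
have -> : index (tnth eA i) eA = val i.
  by rewrite (tnth_nth (tnth eA i)) index_uniq ?size_eA ?enum_uniq.
exact: valK.
Qed.

Definition gfun (p : 'S_#|A|) (t : T) : T :=
  if insub (index t eA) is Some i then tnth eA (p i) else t.

Lemma gfun_inj p : injective (gfun p).
Proof.
have tA i : tnth eA i \in A by rewrite -mem_enum mem_tnth.
have tinj : injective (tnth eA) by apply/tuple_uniqP; apply: enum_uniq.
move=> t1 t2; rewrite /gfun.
case: (boolP (t1 \in A)) => h1; case: (boolP (t2 \in A)) => h2.
- have [i1 [-> ->]] := idx_spec h1; have [i2 [-> ->]] := idx_spec h2.
  by move/tinj/perm_inj => ->.
- have [i1 [-> _]] := idx_spec h1; rewrite idx_out // => e.
  by move: h2; rewrite -e tA.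
- have [i2 [-> _]] := idx_spec h2; rewrite idx_out // => e.
  by move: h1; rewrite e tA.
- by rewrite !idx_out.
Qed.

Lemma tsrt_orbit x y : x \in Xs -> y \in Xs -> tsrt x = tsrt y ->
  y \in orbit actA (Sym A) x.
Proof.
rewrite !inE => /forallP xX /forallP yX /(congr1 val) /= /perm_sortP.
move=> /(_ rle_total rle_trans rle_anti); rewrite perm_sym => /tuple_permP[p E].
have E' : map_tuple y eA = [tuple tnth (map_tuple x eA) (p i) | i < #|A|].
  by apply: val_inj.
apply/orbitP; exists (perm (@gfun_inj p))^-1%g.
  rewrite inE; apply: perm_onV; apply/subsetP => t; rewrite inE permE.
  by apply: contraR => tA; rewrite /gfun idx_out.
apply/ffunP => t; rewrite ffunE invgK permE /gfun.
case: (boolP (t \in A)) => tA.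
  have [i [-> ->]] := idx_spec tA.
  by have := congr1 (fun u => tnth u i) E'; rewrite /= !tnth_map tnth_ord_tuple => ->.
rewrite idx_out //; move: (xX t) (yX t); rewrite tA /= => /eqP -> /eqP -> //.
Qed.

Lemma tsrt_surj (s : #|A|.-tuple 'I_n.+1) : sorted leq (map val s) ->
  exists2 x, x \in Xs & tsrt x = s.
Proof.
move=> ss.
exists [ffun t => if insub (index t eA) is Some i then tnth s i else z t].
  rewrite inE; apply/forallP => t; apply/implyP => tA.
  by rewrite ffunE idx_out.
apply: val_inj => /=.
set f := [ffun t => _].
have E : map_tuple f eA = s.
  by apply: eq_from_tnth => i; rewrite tnth_map ffunE idx_tnth.
have -> : map f eA = s by rewrite -E.
apply: sorted_sort; first exact: rle_trans.
by rewrite sorted_map in ss.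
Qed.

Lemma Phi_orbit x : tsrt (odflt z [pick y in orbit actA (Sym A) x]) = tsrt x.
Proof.
case: pickP => [y /= | h]; last by move: (h x); rewrite orbit_refl.
by case/orbitP => r rS <-; rewrite tsrt_act.
Qed.

Lemma card_orbits : #|orbit actA (Sym A) @: Xs| = 'C(#|A| + n, #|A|).
Proof.
rewrite -card_sorted_tuples.
have E : tsrt @: Xs = [set t : #|A|.-tuple 'I_n.+1 | sorted leq (map val t)].
  apply/setP => s; rewrite inE; apply/imsetP/idP => [[x _ ->] | h].
    by rewrite /= sorted_map; apply: sort_sorted; apply: rle_total.
  by have [x xX <-] := tsrt_surj h; exists x.
rewrite -E.
have E2 : tsrt @: Xs = (fun O : {set {ffun T -> 'I_n.+1}} => tsrt (odflt z [pick y in O])) @: (orbit actA (Sym A) @: Xs).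
  by rewrite -imset_comp; apply: eq_in_imset => x xX /=; rewrite Phi_orbit.
rewrite E2; symmetry; apply: card_in_imset.
move=> O1 O2 /imsetP[x1 x1X ->] /imsetP[x2 x2X ->]; rewrite !Phi_orbit => h.
by apply/orbit_eqP; apply: tsrt_orbit => //; rewrite h.
Qed.

Lemma count_fix :
  (\sum_(x in Xs) #|[set r in Sym A | actf x r == x]|)%N
  = ('C(#|A| + n, #|A|) * #|A|`!)%N.
Proof. by rewrite count_fix1 card_orbits. Qed.

End Count.

Local Open Scope ring_scope.

Section Ent.
Variables (C : numClosedFieldType) (n N : nat).
Local Notation d := n.+1.
Local Notation lbl := (lbl d N).
Local Notation op := (op C d N).
Local Notation ent := (@ent C d N).
Local Notation mkop := (@mkop C d N).

Lemma entE f x y : ent (mkop f) x y = f x y.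
Proof. by rewrite /ent /mkop mxE !enum_rankK. Qed.

Lemma op_eq (M M' : op) : (forall x y, ent M x y = ent M' x y) -> M = M'.
Proof.
move=> h; apply/matrixP => i j; have := h (enum_val i) (enum_val j).
by rewrite /ent !enum_valK.
Qed.

Lemma ent_mul (M M' : op) x y : ent (M *m M') x y = \sum_z ent M x z * ent M' z y.
Proof.
rewrite /ent mxE (reindex (@enum_rank _)) /=; last first.
  by exists enum_val => i _; [apply: enum_rankK | apply: enum_valK].
by [].
Qed.

Lemma ent_sum I (r : seq I) (P : pred I) (F : I -> op) x y :
  ent (\sum_(i <- r | P i) F i) x y = \sum_(i <- r | P i) ent (F i) x y.
Proof. by rewrite /ent summxE. Qed.

Lemma ent_scale c (M : op) x y : ent (c *: M) x y = c * ent M x y.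
Proof. by rewrite /ent mxE. Qed.

Lemma ent_adj (M : op) x y : ent (adj M) x y = (ent M y x)^*.
Proof. by rewrite /ent /adj !mxE. Qed.

End Ent.

Section Gam.
Variables (C : numClosedFieldType) (n N : nat).
Local Notation d := n.+1.
Local Notation lbl := (lbl d N).
Local Notation op := (op C d N).
Local Notation ent := (@ent C d N).
Local Notation o := (ord0 : 'I_N.+1).
Implicit Types (s t u : 'S_N.+1) (x y z : lbl).

Definition gam s x y : bool :=
  upd0 x (y o) == [ffun k => upd0 y (x o) ((s^-1)%g k)].

Definition G s : op := ptrans0 (@Pi C d N s).

Lemma ent_G s x y : ent (G s) x y = (gam s x y)%:R.
Proof. by rewrite /G /ptrans0 entE /Pi entE. Qed.

Lemma permV_eq0 s k : ((s^-1)%g k == o) = (k == s o).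
Proof. by rewrite -(inj_eq (@perm_inj _ s)) permKV. Qed.

Lemma upd0E x i k : upd0 x i k = if k == o then i else x k.
Proof. by rewrite ffunE. Qed.

Definition GamP s x y : Prop :=
  [/\ x (s o) = x o, y ((s^-1)%g o) = y o &
      forall k, k != o -> k != s o -> x k = y ((s^-1)%g k)].

Lemma gamP s x y : s o != o -> reflect (GamP s x y) (gam s x y).
Proof.
move=> s0; have sV0 : (s^-1)%g o != o by rewrite permV_eq0 eq_sym.
rewrite /gam; apply: (iffP eqP) => [E | [h1 h2 h3]].
  have e k : upd0 x (y o) k = upd0 y (x o) ((s^-1)%g k).
    by have := congr1 (fun f : lbl => f k) E; rewrite [in RHS]ffunE.
  rewrite /= in e; have {}e k := etrans (esym (upd0E _ _ _)) (etrans (e k) (upd0E _ _ _)).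
  split.
  - by have := e (s o); rewrite (negbTE s0) permK eqxx.
  - by have := e o; rewrite eqxx (negbTE sV0).
  - move=> k k0 ks; have := e k; rewrite (negbTE k0) permV_eq0 (negbTE ks) //.
apply/ffunP => k; rewrite !ffunE permV_eq0.
case: (eqVneq k o) => [-> | k0]; first by rewrite eq_sym (negbTE s0) h2.
case: (eqVneq k (s o)) => [-> | ks]; first by rewrite h1.
exact: h3.
Qed.


Definition rho s t : 'S_N.+1 :=
  (t * tperm ((s^-1)%g o) (t o) * s * tperm o (s o))%g.

Lemma sV0 s : s o != o -> (s^-1)%g o != o.
Proof. by move=> s0; rewrite permV_eq0 eq_sym. Qed.

Lemma s_eq0 s j : (s j == o) = (j == (s^-1)%g o).
Proof. by rewrite -(inj_eq (@perm_inj _ (s^-1)%g)) permK. Qed.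

Lemma rho0 s t : s o != o -> t o != o -> rho s t o = s o.
Proof.
by move=> s0 t0; rewrite /rho !permM tpermR permKV tpermL.
Qed.

Lemma rhoV0 s t : s o != o -> t o != o -> ((rho s t)^-1)%g o = (t^-1)%g o.
Proof.
move=> s0 t0; rewrite /rho !invMg !tpermV !permM tpermL permK.
by rewrite tpermD //; apply: sV0.
Qed.

Lemma rhoV s t k : k != o -> k != s o ->
  ((rho s t)^-1)%g k = (t^-1)%g (tperm ((s^-1)%g o) (t o) ((s^-1)%g k)).
Proof.
move=> k0 ks; rewrite /rho !invMg !tpermV !permM.
by rewrite (@tpermD _ o (s o) k) // eq_sym.
Qed.

Lemma zsP s x z : GamP s x z -> forall j, j != o -> j != (s^-1)%g o -> z j = x (s j).
Proof.
move=> [_ _ h3] j j0 jB; rewrite h3 ?permK //.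
- by rewrite s_eq0.
- by apply: contra j0 => /eqP /perm_inj ->.
Qed.

Lemma prod_claim1 s t x y z : s o != o -> t o != o -> (s^-1)%g o != t o ->
  (gam s x z && gam t z y) =
  (z == [ffun j => if (j == o) || (j == (s^-1)%g o) then x (s (t o)) else x (s j)])
  && gam (rho s t) x y.
Proof.
move=> s0 t0 BA; have B0 := sV0 s0.
have r0 : rho s t o != o by rewrite rho0.
apply/andP/andP => [[/(gamP _ _ s0) hs /(gamP _ _ t0) ht] | [/eqP zE /(gamP _ _ r0) hr]].
  have zs := zsP hs; case: hs => hs1 hs2 hs3; case: ht => ht1 ht2 ht3.
  split.
    apply/eqP/ffunP => j; rewrite ffunE.
    case: (eqVneq j o) => [-> | j0] /=.
      by rewrite -ht1 zs // eq_sym.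
    case: (eqVneq j _) => [-> | jB]; last by rewrite zs.
    by rewrite hs2 -ht1 zs // eq_sym.
  apply/(gamP _ _ r0); split; rewrite ?rho0 ?rhoV0 //.
  move=> k k0 kA; rewrite rhoV // hs3 //.
  set j := (s^-1)%g k.
  have j0 : j != o by rewrite permV_eq0.
  have jB : j != (s^-1)%g o.
    by apply: contra k0 => /eqP /perm_inj ->.
  case: (eqVneq j (t o)) => [jA | jA].
    rewrite jA tpermR ht1 -hs2 ht3 //.
  by rewrite tpermD // ?ht3 // eq_sym.
have rr0 := rho0 s0 t0; have rrV0 := rhoV0 s0 t0.
case: hr => hr1 hr2 hr3; rewrite rr0 in hr1 hr3; rewrite rrV0 in hr2.
have zE' j : z j = if (j == o) || (j == (s^-1)%g o) then x (s (t o)) else x (s j).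
  by rewrite zE ffunE.
have At0 : s (t o) != o by rewrite s_eq0 eq_sym.
have AtA : s (t o) != s o by rewrite (inj_eq perm_inj).
split.
  apply/(gamP _ _ s0); split => //.
    by rewrite !zE' !eqxx orbT.
  move=> k k0 kA; rewrite zE' permV_eq0 (negbTE kA) /=.
  by rewrite (inj_eq perm_inj) (negbTE k0) permKV.
apply/(gamP _ _ t0); split => //.
  by rewrite !zE' eqxx (negbTE t0) eq_sym (negbTE BA).
move=> k k0 kA; rewrite zE' (negbTE k0) /=.
case: (eqVneq k _) => [kB | kB] /=.
  by rewrite hr3 // rhoV // permK tpermR kB.
have sk0 : s k != o by rewrite s_eq0.
have skA : s k != s o by rewrite (inj_eq perm_inj).
by rewrite hr3 // rhoV // permK tpermD // eq_sym.
Qed.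


Lemma prod_claim2 s t x y z : s o != o -> t o != o -> (s^-1)%g o = t o ->
  (gam s x z && gam t z y) =
  (z == [ffun j => if (j == o) || (j == (s^-1)%g o) then z o else x (s j)])
  && gam (rho s t) x y.
Proof.
move=> s0 t0 BA; have B0 := sV0 s0.
have r0 : rho s t o != o by rewrite rho0.
have tp1 j : tperm ((s^-1)%g o) (t o) j = j by rewrite BA tperm1 perm1.
apply/andP/andP => [[/(gamP _ _ s0) hs /(gamP _ _ t0) ht] | [/eqP zE /(gamP _ _ r0) hr]].
  have zs := zsP hs; case: hs => hs1 hs2 hs3; case: ht => ht1 ht2 ht3.
  split.
    apply/eqP/ffunP => j; rewrite ffunE.
    case: (eqVneq j o) => [-> // | j0] /=.
    case: (eqVneq j _) => [-> // | jB]; last by rewrite zs.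
  apply/(gamP _ _ r0); split; rewrite ?rho0 ?rhoV0 //.
  move=> k k0 kA; rewrite rhoV // hs3 // tp1.
  set j := (s^-1)%g k.
  have j0 : j != o by rewrite permV_eq0.
  have jB : j != (s^-1)%g o.
    by apply: contra k0 => /eqP /perm_inj ->.
  by rewrite ht3 // -BA.
have rr0 := rho0 s0 t0; have rrV0 := rhoV0 s0 t0.
case: hr => hr1 hr2 hr3; rewrite rr0 in hr1 hr3; rewrite rrV0 in hr2.
have zE' j : z j = if (j == o) || (j == (s^-1)%g o) then z o else x (s j).
  by rewrite {1}zE ffunE.
split.
  apply/(gamP _ _ s0); split => //.
    by rewrite zE' eqxx orbT.
  move=> k k0 kA; rewrite zE' permV_eq0 (negbTE kA) /=.
  by rewrite (inj_eq perm_inj) (negbTE k0) permKV.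
apply/(gamP _ _ t0); split => //.
  by rewrite zE' -BA eqxx orbT.
move=> k k0 kA; rewrite zE' (negbTE k0) /= BA (negbTE kA).
have sk0 : s k != o by rewrite s_eq0 BA.
have skA : s k != s o by rewrite (inj_eq perm_inj).
by rewrite hr3 // rhoV // permK tp1.
Qed.

Lemma sum_gam s t x y : s o != o -> t o != o ->
  (\sum_z (gam s x z && gam t z y))%N =
  ((if (s^-1)%g o == t o then d else 1) * gam (rho s t) x y)%N.
Proof.
move=> s0 t0; case: eqP => BA.
  rewrite (eq_bigr (fun z => (z == [ffun j => if (j == o) || (j == (s^-1)%g o) then z o else x (s j)]) * gam (rho s t) x y)%N); last first.
    by move=> z _; rewrite prod_claim2 // -mulnb.
  rewrite -big_distrl /=; congr (_ * _)%N.
  set zw := fun w : 'I_d => [ffun j => if (j == o) || (j == (s^-1)%g o) then w else x (s j)].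
  transitivity (\sum_z \sum_(w : 'I_d) (z == zw w : nat))%N.
    apply: eq_bigr => z _; rewrite (bigD1 (z o)) //= big1 ?addn0 // => w wz.
    apply/eqP; rewrite eqb0; apply: contra wz => /eqP ->.
    by rewrite ffunE eqxx.
  rewrite exchange_big /=; transitivity (\sum_(w : 'I_d) 1)%N; last by rewrite sum1_card card_ord.
  apply: eq_bigr => w _.
  rewrite (bigD1 (zw w)) //= eqxx big1 ?addn0 // => z /negbTE ->.
  by [].
rewrite (eq_bigr (fun z => (z == [ffun j => if (j == o) || (j == (s^-1)%g o) then x (s (t o)) else x (s j)]) * gam (rho s t) x y)%N); last first.
  by move=> z _; rewrite prod_claim1 //; [rewrite -mulnb | apply/eqP].
rewrite -big_distrl /= mul1n.
set zz := [ffun j => _].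
by rewrite (bigD1 zz) //= eqxx big1 ?addn0 ?mul1n // => z /negbTE ->.
Qed.

End Gam.

Section Sig.
Variables (C : numClosedFieldType) (n N : nat).
Local Notation d := n.+1.
Local Notation lbl := (lbl d N).
Local Notation op := (op C d N).
Local Notation ent := (@ent C d N).
Local Notation o := (ord0 : 'I_N.+1).
Local Notation G := (@G C n N).
Implicit Types (s t u : 'S_N.+1) (x y z : lbl).

Lemma G_mul s t : s o != o -> t o != o ->
  G s *m G t = (if (s^-1)%g o == t o then d%:R else 1) *: G (rho s t).
Proof.
move=> s0 t0; apply: op_eq => x y; rewrite ent_mul ent_scale ent_G.
have -> : \sum_z ent (G s) x z * ent (G t) z y =
          ((\sum_z (gam s x z && gam t z y))%N)%:R :> C.
  by rewrite natr_sum; apply: eq_bigr => z _; rewrite !ent_G -natrM mulnb.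
by rewrite sum_gam // natrM; case: ifP.
Qed.

Definition sig (a b : 'I_N) s := (s o == lift o a) && (s (lift o b) == o).

Lemma sig0 a b s : sig a b s -> s o = lift o a.
Proof. by case/andP => /eqP. Qed.
Lemma sigV0 a b s : sig a b s -> (s^-1)%g o = lift o b.
Proof. by case/andP => _ /eqP h; rewrite -[in LHS]h permK. Qed.
Lemma sig_n0 a b s : sig a b s -> s o != o.
Proof. by move/sig0 ->; rewrite eq_sym neq_lift. Qed.

Definition Aset (A : 'I_N.+1) : {set 'I_N.+1} := [set~ o] :\ A.

Lemma perm_on2 u A : A != o -> perm_on (Aset A) u = (u o == o) && (u A == A).
Proof.
move=> A0; apply/idP/andP => [h | [/eqP h1 /eqP h2]].
  by split; apply/eqP; apply: (out_perm h); rewrite !inE ?eqxx ?andbF ?andbT.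
apply/subsetP => k; rewrite !inE; apply: contraR.
by rewrite negb_and !negbK => /orP[] /eqP ->; rewrite ?h1 ?h2 eqxx.
Qed.

Lemma card_Aset A : A != o -> #|Aset A| = N.-1.
Proof.
move=> A0; have := cardsD1 A [set~ o].
rewrite cardsC1 card_ord !inE A0 /= add1n => h.
by rewrite [in RHS]h.
Qed.

Definition phi (A B : 'I_N.+1) u := (tperm A B * u * tperm o A)%g.

Lemma phi_inj A B : injective (phi A B).
Proof. by move=> u v; rewrite /phi => /mulIg /mulgI. Qed.

Lemma tperm_eqL (x y v : 'I_N.+1) : (tperm x y v == y) = (v == x).
Proof.
apply/eqP/eqP => [h | ->]; last exact: tpermL.
by apply: (@perm_inj _ (tperm x y)); rewrite h tpermL.
Qed.
Lemma tperm_eqR (x y v : 'I_N.+1) : (tperm x y v == x) = (v == y).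
Proof. by rewrite tpermC tperm_eqL. Qed.

Lemma sig_phi a b u : sig a b (phi (lift o a) (lift o b) u) = perm_on (Aset (lift o a)) u.
Proof.
have A0 : lift o a != o by rewrite eq_sym neq_lift.
have B0 : lift o b != o by rewrite eq_sym neq_lift.
rewrite perm_on2 // /sig /phi !permM (@tpermD _ (lift o a) (lift o b) o) // tpermR.
by rewrite tperm_eqL tperm_eqR.
Qed.

Lemma card_sig a b : (\sum_(s | sig a b s) 1)%N = (N.-1)`!.
Proof.
rewrite (reindex_inj (@phi_inj (lift o a) (lift o b))) /=.
rewrite (eq_bigl _ _ (@sig_phi a b)) sum1dep_card.
rewrite -(card_Aset (A := lift o a)) ?(eq_sym _ o) ?neq_lift // -card_perm.
by apply: eq_card => u; rewrite inE.
Qed.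

Lemma sum_sig_constV (V : nmodType) a b (v : V) : \sum_(s | sig a b s) v = v *+ (N.-1)`!.
Proof.
by rewrite -(card_sig a b) -sumrMnr; apply: eq_bigr => s _; rewrite mulr1n.
Qed.

Lemma sum_sig_const a b (M : op) : \sum_(s | sig a b s) M = M *+ (N.-1)`!.
Proof.
by rewrite -(card_sig a b) -sumrMnr; apply: eq_bigr => s _; rewrite mulr1n.
Qed.

End Sig.
Arguments sig0 {N a b s}. Arguments sigV0 {N a b s}. Arguments sig_n0 {N a b s}.

Section Sq.
Variables (C : numClosedFieldType) (n N : nat) (beta : 'I_N -> C).
Local Notation d := n.+1.
Local Notation lbl := (lbl d N).
Local Notation op := (op C d N).
Local Notation ent := (@ent C d N).
Local Notation o := (ord0 : 'I_N.+1).
Local Notation G := (@G C n N).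
Local Notation sig := (@sig N).
Implicit Types (s t u : 'S_N.+1) (x y z : lbl).

Lemma sum_rho a b a' b' s (F : 'S_N.+1 -> op) : sig a b s ->
  \sum_(t | sig a' b' t) F (rho s t) = \sum_(u | sig a b' u) F u.
Proof.
move=> hs; set h := (tperm (lift o b) (lift o a') * s * tperm o (lift o a))%g.
have A0 : lift o a != o by rewrite eq_sym neq_lift.
have B0 : lift o b != o by rewrite eq_sym neq_lift.
have A'0 : lift o a' != o by rewrite eq_sym neq_lift.
transitivity (\sum_(t | sig a' b' t) F (t * h)%g).
  apply: eq_bigr => t ht; congr F.
  by rewrite /rho (sigV0 hs) (sig0 ht) (sig0 hs) /h !mulgA.
rewrite [RHS](reindex_inj (mulIg h)) /=; apply: eq_bigl => t.
have sB : s (lift o b) = o by case/andP: hs => _ /eqP.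
have hA : h (lift o a') = lift o a by rewrite /h !permM tpermR sB tpermL.
have h0 : h o = o.
  by rewrite /h !permM (@tpermD _ (lift o b) (lift o a') o) // (sig0 hs) tpermR.
have e1 v : (h v == lift o a) = (v == lift o a') by rewrite -hA (inj_eq perm_inj).
have e2 v : (h v == o) = (v == o) by rewrite -{1}h0 (inj_eq perm_inj).
by rewrite /sig !(permM t h) e1 e2.
Qed.

Definition fN : C := (N.-1)`!%:R.
Definition cf a b := beta a * beta b / fN.
Definition Sm a b : op := \sum_(u | sig a b u) G u.
Definition lam : C := (d%:R - 1) * (\sum_(i < N) beta i ^+ 2) + (\sum_(i < N) beta i) ^+ 2.
Definition w (b a : 'I_N) : C := if b == a then d%:R else 1.

Lemma fN_neq0 : fN != 0.
Proof. by rewrite /fN pnatr_eq0 -lt0n fact_gt0. Qed.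

Lemma CtE : Ctilde d beta = \sum_a \sum_b \sum_(s | sig a b s) cf a b *: G s.
Proof. by []. Qed.

Lemma lamE : \sum_b \sum_a beta b * beta a * w b a = lam.
Proof.
transitivity (\sum_b (beta b * \sum_a beta a + (d%:R - 1) * beta b ^+ 2)).
  apply: eq_bigr => b _; rewrite mulr_sumr (bigD1 b) //= [in RHS](bigD1 b) //=.
  rewrite /w eqxx (eq_bigr (fun a => beta b * beta a)); last first.
    by move=> a ab; rewrite eq_sym (negbTE ab) mulr1.
  ring.
rewrite big_split /= -mulr_suml -mulr_sumr /lam expr2 addrC.
by [].
Qed.

Lemma Ct_sq : Ctilde d beta *m Ctilde d beta = lam *: Ctilde d beta.
Proof.
rewrite CtE.
transitivity (\sum_a \sum_b \sum_(s | sig a b s) \sum_a' \sum_b'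
                (cf a b * cf a' b' * w b a') *: Sm a b').
  rewrite mulmx_suml; apply: eq_bigr => a _; rewrite mulmx_suml; apply: eq_bigr => b _.
  rewrite mulmx_suml; apply: eq_bigr => s hs; rewrite mulmx_sumr; apply: eq_bigr => a' _.
  rewrite mulmx_sumr; apply: eq_bigr => b' _; rewrite mulmx_sumr.
  transitivity (\sum_(t | sig a' b' t) (cf a b * cf a' b' * w b a') *: G (rho s t)).
    apply: eq_bigr => t ht; rewrite -scalemxAl -scalemxAr G_mul ?(sig_n0 hs) ?(sig_n0 ht) //.
    rewrite (sigV0 hs) (sig0 ht) (inj_eq lift_inj) !scalerA /w.
    by congr (_ *: _); rewrite mulrA.
  by rewrite (@sum_rho a b a' b' s (fun u => (cf a b * cf a' b' * w b a') *: G u) hs) -scaler_sumr.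
under eq_bigr => a _ do under eq_bigr => b _ do rewrite sum_sig_const -scaler_nat scaler_sumr.
transitivity (\sum_a \sum_b' (lam * cf a b') *: Sm a b').
  apply: eq_bigr => a _.
  under eq_bigr => b _ do under eq_bigr => a' _ do rewrite scaler_sumr.
  under eq_bigr => b _ do rewrite exchange_big /=.
  rewrite exchange_big /=; apply: eq_bigr => b' _.
  under eq_bigr => b _ do under eq_bigr => a' _ do rewrite scalerA.
  under eq_bigr => b _ do rewrite -scaler_suml.
  rewrite -scaler_suml; congr (_ *: _).
  rewrite -lamE mulr_suml; apply: eq_bigr => b _; rewrite mulr_suml; apply: eq_bigr => a' _.
  rewrite /cf; have := fN_neq0; rewrite -/fN => hf.
  by field.
rewrite scaler_sumr; apply: eq_bigr => a _; rewrite scaler_sumr; apply: eq_bigr => b _.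
by rewrite /Sm -scalerA -scaler_sumr.
Qed.


Lemma gamV s x y : s o != o -> gam s y x = gam (s^-1)%g x y.
Proof.
move=> s0; have s0' := sV0 s0.
apply/(gamP _ _ s0)/(gamP _ _ s0'); rewrite /GamP invgK.
  case=> h1 h2 h3; split => // k k0 kB.
  rewrite h3 ?permK //; first by rewrite s_eq0.
  by rewrite (inj_eq perm_inj).
case=> h1 h2 h3; split => // k k0 kA.
rewrite h3 ?permKV //; first by rewrite permV_eq0.
by apply: contra k0 => /eqP /perm_inj ->.
Qed.

Lemma cf_real a b : (forall i, beta i \is Num.real) -> cf a b \is Num.real.
Proof.
by move=> hr; rewrite /cf rpred_div ?rpredM ?hr // /fN realn.
Qed.

Lemma conj_sum I (r : seq I) (P : pred I) (F : I -> C) :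
  (\sum_(i <- r | P i) F i)^* = \sum_(i <- r | P i) (F i)^*.
Proof. exact: rmorph_sum. Qed.

Lemma permV_eq s k v : ((s^-1)%g k == v) = (k == s v).
Proof. by rewrite -(inj_eq (@perm_inj _ s)) permKV. Qed.

Lemma Ct_adj : (forall i, beta i \is Num.real) -> adj (Ctilde d beta) = Ctilde d beta.
Proof.
move=> hr; apply: op_eq => x y; rewrite ent_adj CtE ent_sum conj_sum /=.
transitivity (\sum_a \sum_b \sum_(s | sig a b s) cf a b * (gam (s^-1)%g x y)%:R).
  apply: eq_bigr => a _; rewrite ent_sum conj_sum; apply: eq_bigr => b _.
  rewrite ent_sum conj_sum; apply: eq_bigr => s hs.
  rewrite ent_scale ent_G conj_Creal; last by rewrite rpredM ?cf_real ?realn.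
  by rewrite gamV // (sig_n0 hs).
under eq_bigr => a _ do under eq_bigr => b _ do
  rewrite (reindex_inj (@invg_inj _)) /=.
rewrite exchange_big ent_sum /=; apply: eq_bigr => b _; rewrite ent_sum; apply: eq_bigr => a _.
rewrite ent_sum; apply: eq_big => [u | u hu].
  by rewrite /sig !permV_eq andbC [ord0 == _]eq_sym [lift ord0 a == _]eq_sym.
by rewrite ent_scale ent_G /cf; congr (_ / _ * _); exact: mulrC.
Qed.

Definition o1 : 'I_d := inord 1.
Definition xc (c : 'I_N) : lbl := [ffun k => if (k == o) || (k == lift o c) then ord0 else o1].

Lemma gam_xc s c : (1 <= n)%N -> s o != o ->
  gam s (xc c) (xc c) = (s o == lift o c) && ((s^-1)%g o == lift o c).
Proof.
move=> n1 s0; have s0' := sV0 s0.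
have o10 : (o1 == ord0) = false.
  by apply/negbTE; rewrite -val_eqE /= inordK.
apply/(gamP _ _ s0)/andP => [[h1 h2 _] | [/eqP e1 /eqP e2]].
  split.
    by move: h1; rewrite !ffunE eqxx (negbTE s0) /=; case: eqP => // _ /eqP; rewrite o10.
  by move: h2; rewrite !ffunE eqxx (negbTE s0') /=; case: eqP => // _ /eqP; rewrite o10.
split.
- by rewrite !ffunE e1 !eqxx orbT.
- by rewrite !ffunE e2 !eqxx orbT.
move=> k k0 kA; rewrite !ffunE (negbTE k0) -e1 (negbTE kA) permV_eq0 (negbTE kA) /=.
by rewrite e1 -e2 (inj_eq perm_inj) (negbTE k0).
Qed.

Lemma ent_xc c : (1 <= n)%N -> ent (Ctilde d beta) (xc c) (xc c) = beta c ^+ 2.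
Proof.
move=> n1; rewrite CtE ent_sum.
under eq_bigr => a _ do rewrite ent_sum.
under eq_bigr => a _ do under eq_bigr => b _ do rewrite ent_sum.
transitivity (\sum_a \sum_b (((a == c) && (b == c))%:R * cf a b) *+ (N.-1)`!).
  apply: eq_bigr => a _; apply: eq_bigr => b _; rewrite -(sum_sig_constV a b).
  apply: eq_bigr => s hs; rewrite ent_scale ent_G gam_xc ?(sig_n0 hs) //.
  by rewrite (sig0 hs) (sigV0 hs) !(inj_eq lift_inj) mulrC.
transitivity (\sum_a ((a == c)%:R * (cf a c *+ (N.-1)`!))).
  apply: eq_bigr => a _; rewrite (bigD1 c) //= big1 ?addr0 => [|b bc].
    by rewrite eqxx andbT mulrnAr.
  by rewrite (negbTE bc) andbF mul0r mul0rn.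
rewrite (bigD1 c) //= big1 ?addr0 => [|a ac]; last by rewrite (negbTE ac) mul0r.
rewrite eqxx mul1r -mulr_natr /cf -/fN.
by have := fN_neq0; rewrite /fN => hf; field.
Qed.

End Sq.

Section PT.
Variables (C : numClosedFieldType) (n N : nat).
Local Notation d := n.+1.
Local Notation lbl := (lbl d N).
Local Notation op := (op C d N).
Local Notation ent := (@ent C d N).
Local Notation o := (ord0 : 'I_N.+1).
Local Notation G := (@G C n N).
Local Notation sig := (@sig N).
Implicit Types (s t u : 'S_N.+1) (x y z : lbl).

Lemma gam_updP s x j : s o != o ->
  reflect [/\ x (s o) = x o, x ((s^-1)%g o) = j &
             forall k, k != o -> k != s o -> x k = x ((s^-1)%g k)]
          (gam s x (upd0 x j)).
Proof.
move=> s0; have s0' := sV0 s0.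
apply: (iffP (gamP _ _ s0)); rewrite /GamP !upd0E eqxx (negbTE s0').
  case=> h1 h2 h3; split => // k k0 kA; rewrite h3 // upd0E permV_eq0 (negbTE kA) //.
case=> h1 h2 h3; split => // k k0 kA; rewrite upd0E permV_eq0 (negbTE kA) h3 //.
Qed.

Lemma sum3 (F : 'I_N.+1 -> nat) A : A != o ->
  (\sum_k F k = F o + F A + \sum_(k | (k != o) && (k != A)) F k)%N.
Proof.
move=> A0; rewrite (bigD1 o) //= (bigD1 A) //= addnA; congr (_ + _ + _)%N.
Qed.

Lemma gam_upd_neq s x i j : s o != o -> x o = i -> i != j -> gam s x (upd0 x j) = false.
Proof.
move=> s0 xi ij; apply/negbTE/negP => /(gam_updP _ _ s0) [h1 h2 h3].
set F := fun k => (x k == i : nat).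
have E : (\sum_k F ((s^-1)%g k) = \sum_k F k)%N.
  by rewrite [RHS](reindex_inj (@perm_inj _ (s^-1)%g)).
rewrite !(sum3 _ s0) permK in E.
have E2 : (\sum_(k | (k != o) && (k != s o)) F ((s^-1)%g k) =
           \sum_(k | (k != o) && (k != s o)) F k)%N.
  by apply: eq_bigr => k /andP[k0 kA]; rewrite /F (h3 k).
rewrite E2 in E.
have e3 : F ((s^-1)%g o) = F (s o) by lia.
by move: e3; rewrite /F h2 h1 xi eqxx eq_sym (negbTE ij).
Qed.


Lemma gam_upd_eq s x i : s o != o -> x o = i ->
  gam s x (upd0 x i) = [&& x (s o) == i, x ((s^-1)%g o) == i & actf x s == x].
Proof.
move=> s0 xi; apply/(gam_updP _ _ s0)/and3P => [[h1 h2 h3] | [/eqP h1 /eqP h2 /eqP h3]].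
  split; [by rewrite h1 xi | by rewrite h2 |].
  apply/eqP/ffunP => k; rewrite ffunE.
  case: (eqVneq k o) => [-> | k0]; first by rewrite h2 xi.
  case: (eqVneq k (s o)) => [-> | kA]; first by rewrite permK h1.
  by rewrite -h3.
split; [by rewrite h1 xi | by [] |] => k _ _.
by have := congr1 (fun f : lbl => f k) h3; rewrite ffunE => ->.
Qed.

Lemma tpermK2 (T : finType) (a b : T) : (tperm a b * tperm a b)%g = 1%g.
Proof. exact: tperm2. Qed.

Lemma actf_tperm x A B : x A = x B -> actf x (tperm A B) = x.
Proof.
move=> e; apply/ffunP => k; rewrite ffunE tpermV.
by case: tpermP => [->|->|] // _ _; rewrite e.
Qed.

Lemma actf_phi x A B u : x A = x B -> x o = x A ->
  (actf x (phi A B u) == x) = (actf x u == x).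
Proof.
move=> eAB e0A; rewrite /phi !actfM (@actf_tperm x A B eAB).
have hx : actf x (tperm o A) = x by apply: actf_tperm.
have hinv (v : lbl) : actf (actf v (tperm o A)) (tperm o A) = v by rewrite -actfM tperm2 actf1.
apply/eqP/eqP => [h | hw]; last by rewrite hw hx.
by rewrite -(hinv (actf x u)) h hx.
Qed.

Definition gcount (A : 'I_N.+1) x : nat := #|[set u in Sym (Aset A) | actf x u == x]|.

Lemma sum_sig_fix a b x : x o = x (lift o a) -> x (lift o a) = x (lift o b) ->
  (\sum_(s | sig a b s) (actf x s == x))%N = gcount (lift o a) x.
Proof.
move=> e0 eab.
rewrite (reindex_inj (@phi_inj N (lift o a) (lift o b))) /=.
rewrite (eq_bigl _ _ (@sig_phi N a b)).
rewrite /gcount card_setb; apply: eq_big => [u | u _]; first by rewrite inE.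
by rewrite actf_phi.
Qed.

Lemma H_eq a b i :
  (\sum_(s | sig a b s) \sum_(x : lbl | x o == i) gam s x (upd0 x i))%N =
  (\sum_(x : lbl | [&& x o == i, x (lift o a) == i & x (lift o b) == i]) gcount (lift o a) x)%N.
Proof.
rewrite exchange_big /= [LHS]big_mkcond [RHS]big_mkcond; apply: eq_bigr => x _.
case: (eqVneq (x o) i) => xi //=.
transitivity (\sum_(s | sig a b s) ((x (lift o a) == i) && (x (lift o b) == i) && (actf x s == x)))%N.
  apply: eq_bigr => s hs; rewrite gam_upd_eq ?(sig_n0 hs) //.
  by rewrite (sig0 hs) (sigV0 hs) andbA.
case: (eqVneq (x (lift o a)) i) => xa /=; last by rewrite big1.
case: (eqVneq (x (lift o b)) i) => xb /=; last by rewrite big1.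
by rewrite sum_sig_fix // ?xi ?xa ?xb.
Qed.

Lemma inXs A i x : A != o ->
  (x \in Xs (Aset A) [ffun=> i]) = (x o == i) && (x A == i).
Proof.
move=> A0; rewrite inE; apply/forallP/andP => [h | [/eqP h0 /eqP hA] t].
  by split; [have := h o | have := h A]; rewrite !inE ?eqxx ?andbF ?andbT ffunE.
rewrite !inE ffunE negb_and !negbK; apply/implyP => /orP[] /eqP ->; apply/eqP => //.
Qed.

Lemma sumK A i : A != o ->
  (\sum_(x : lbl | (x o == i) && (x A == i)) gcount A x)%N = ('C(N.-1 + n, N.-1) * (N.-1)`!)%N.
Proof.
move=> A0; rewrite -(card_Aset A0) -(@count_fix _ n (Aset A) [ffun=> i]).
by apply: eq_bigl => x; rewrite inXs.
Qed.

Definition sw (S : {set 'I_N.+1}) (i c : 'I_d) x : lbl :=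
  [ffun k => if k \in S then tperm i c (x k) else x k].

Lemma swK S i c : involutive (sw S i c).
Proof.
move=> x; apply/ffunP => k; rewrite !ffunE.
by case: (k \in S) => //; rewrite tpermK.
Qed.

Lemma tperm_eqL' (T : finType) (a b v : T) : (tperm a b v == b) = (v == a).
Proof.
apply/eqP/eqP => [h | ->]; last exact: tpermL.
by apply: (@perm_inj _ (tperm a b)); rewrite h tpermL.
Qed.

Lemma gcount_sw A i c x : gcount A (sw (Aset A) i c x) = gcount A x.
Proof.
rewrite /gcount; apply: eq_card => u; rewrite !inE.
case: (boolP (perm_on (Aset A) u)) => //= hu.
have -> : actf (sw (Aset A) i c x) u = sw (Aset A) i c (actf x u).
  apply/ffunP => k; rewrite !ffunE perm_closed //; exact: perm_onV.
by rewrite (inj_eq (can_inj (swK _ _ _))).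
Qed.

Lemma sumK' A B i : A != o -> B != o -> A != B ->
  (d * \sum_(x : lbl | [&& x o == i, x A == i & x B == i]) gcount A x)%N =
  (\sum_(x : lbl | (x o == i) && (x A == i)) gcount A x)%N.
Proof.
move=> A0 B0 AB.
have BS : B \in Aset A by rewrite !inE B0 eq_sym AB.
rewrite [RHS](partition_big (fun x : lbl => x B) predT) //=.
rewrite [LHS](_ : _ = \sum_(c : 'I_d) (\sum_(x : lbl | [&& x o == i, x A == i & x B == i]) gcount A x))%N; last by rewrite sum_nat_const card_ord.
apply: eq_bigr => c _.
rewrite [RHS](reindex_inj (can_inj (swK (Aset A) i c))) /=.
apply: eq_big => [x | x _]; last by rewrite gcount_sw.
have e0 : sw (Aset A) i c x o = x o by rewrite ffunE !inE eqxx andbF.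
have eA : sw (Aset A) i c x A = x A by rewrite ffunE !inE eqxx.
have eB : sw (Aset A) i c x B = tperm i c (x B) by rewrite ffunE BS.
by rewrite e0 eA eB tperm_eqL' andbA.
Qed.


Definition Kc : nat := ('C(N.-1 + n, N.-1) * (N.-1)`!)%N.

Lemma H_val a b (i j : 'I_d) :
  ((\sum_(s | sig a b s) \sum_(x : lbl | x o == i) gam s x (upd0 x j))%N)%:R =
  (i == j)%:R * (if a == b then Kc%:R else Kc%:R / d%:R) :> C.
Proof.
case: (eqVneq i j) => [<- | ij]; last first.
  rewrite mul0r big1 // => s hs; rewrite big1 // => x /eqP xi.
  by rewrite (@gam_upd_neq s x i j) ?(sig_n0 hs).
rewrite mul1r H_eq.
have A0 : lift o a != o by rewrite eq_sym neq_lift.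
case: (eqVneq a b) => [<- | ab].
  rewrite (eq_bigl (fun x : lbl => (x o == i) && (x (lift o a) == i))); last first.
    by move=> x; rewrite andbb.
  by rewrite sumK.
have B0 : lift o b != o by rewrite eq_sym neq_lift.
have AB : lift o a != lift o b by rewrite (inj_eq lift_inj).
have := sumK' i A0 B0 AB; rewrite sumK // => /(congr1 (fun m => m%:R : C)).
rewrite natrM => h; rewrite -h -/Kc; field.
by rewrite -[1]/(1%:R) -natrD add1n pnatr_eq0.
Qed.

End PT.

Section PT2.
Variables (C : numClosedFieldType) (n N : nat) (beta : 'I_N -> C).
Local Notation d := n.+1.
Local Notation lbl := (lbl d N).
Local Notation op := (op C d N).
Local Notation ent := (@ent C d N).
Local Notation o := (ord0 : 'I_N.+1).
Local Notation G := (@G C n N).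
Local Notation sig := (@sig N).

Lemma ptrace_scale c (M : op) : ptrace_rest (c *: M) = c *: ptrace_rest M.
Proof.
apply/matrixP => i j; rewrite !mxE mulr_sumr; apply: eq_bigr => x _.
by rewrite ent_scale.
Qed.

Lemma ptrace_Ct i j : ptrace_rest (Ctilde d beta) i j =
  (i == j)%:R * ('C(N.-1 + n, N.-1)%:R / d%:R) * lam n beta.
Proof.
rewrite mxE.
transitivity (\sum_a \sum_b cf beta a b *
  ((\sum_(s | sig a b s) \sum_(x : lbl | x o == i) gam s x (upd0 x j))%N)%:R).
  rewrite CtE.
  under eq_bigr => x _ do rewrite ent_sum.
  rewrite exchange_big /=; apply: eq_bigr => a _.
  under eq_bigr => x _ do rewrite ent_sum.
  rewrite exchange_big /=; apply: eq_bigr => b _.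
  under eq_bigr => x _ do rewrite ent_sum.
  rewrite exchange_big /= natr_sum mulr_sumr; apply: eq_bigr => s hs.
  rewrite natr_sum mulr_sumr; apply: eq_bigr => x _.
  by rewrite ent_scale ent_G.
under eq_bigr => a _ do under eq_bigr => b _ do rewrite H_val.
rewrite -(lamE n beta).
have hf : fN C N != 0 by apply: fN_neq0.
transitivity (\sum_a \sum_b ((i == j)%:R * ('C(N.-1 + n, N.-1)%:R / d%:R)) *
                           (beta a * beta b * w C n a b)).
  apply: eq_bigr => a _; apply: eq_bigr => b _.
  have hd : 1 + n%:R != 0 :> C by rewrite -[1]/(1%:R) -natrD add1n pnatr_eq0.
  have hf' : (N.-1)`!%:R != 0 :> C := hf.
  by rewrite /cf /w /Kc natrM -/(fN C N); case: (a == b); field; rewrite hd hf'.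
rewrite mulr_sumr; apply: eq_bigr => a _; rewrite mulr_sumr; apply: eq_bigr => b _.
by [].
Qed.

End PT2.

Section Final.
Variables (C : numClosedFieldType) (n N : nat).
Local Notation d := n.+1.
Local Notation op := (op C d N).

Lemma psd_proj (P : op) : P *m P = P -> adj P = P -> psd P.
Proof.
move=> hsq hadj v.
have -> : map_mx Num.conj v^T *m P *m v = map_mx Num.conj ((P *m v)^T) *m (P *m v).
  rewrite trmx_mul map_mxM.
  have -> : map_mx Num.conj P^T = adj P by [].
  by rewrite hadj mulmxA -(mulmxA _ P P) hsq.
rewrite mxE; apply: sumr_ge0 => k _; rewrite !mxE mulrC; exact: mul_conjC_ge0.
Qed.

Lemma psd_scale c (M : op) : 0 <= c -> psd M -> psd (c *: M).
Proof.
move=> c0 hM v; rewrite -scalemxAr -scalemxAl mxE.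
by apply: mulr_ge0 => //; apply: hM.
Qed.

End Final.

Unset Implicit Arguments.

Theorem mainTheorem11 (C : numClosedFieldType) (d N : nat)
  (hd : (2 <= d)%N) (hN : (1 <= N)%N)
  (beta : 'I_N -> C) (hreal : forall i, beta i \is Num.real)
  (hnz : exists a b, beta a * beta b != 0) :
  (is_orth_proj (Ctilde d beta) <->
     (d%:R - 1) * (\sum_(i < N) beta i ^+ 2) + (\sum_(i < N) beta i) ^+ 2 = 1)
  /\
  ((d%:R - 1) * (\sum_(i < N) beta i ^+ 2) + (\sum_(i < N) beta i) ^+ 2 = 1 ->
     psd (Cbeta d beta) /\ ptrace_rest (Cbeta d beta) = 1%:M
     /\ is_choi_channel (Cbeta d beta)).
Proof.
case: d hd => [|n] // hd.
have n1 : (1 <= n)%N by [].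
have eL : (n.+1%:R - 1) * (\sum_(i < N) beta i ^+ 2) + (\sum_(i < N) beta i) ^+ 2
          = lam n beta by [].
rewrite eL.
have Hsq := Ct_sq n beta.
have Hadj := Ct_adj n hreal.
have proj1 : lam n beta = 1 -> is_orth_proj (Ctilde n.+1 beta).
  by move=> hl; split => //; rewrite Hsq hl scale1r.
split.
  split => [[hsq _] | ]; last exact: proj1.
  case: hnz => a [b hab].
  have ha : beta a != 0 by apply: contra hab => /eqP ->; rewrite mul0r.
  have e : ent (lam n beta *: Ctilde n.+1 beta) (xc n a) (xc n a) =
           ent (Ctilde n.+1 beta) (xc n a) (xc n a) by rewrite -Hsq hsq.
  rewrite ent_scale ent_xc // in e.
  apply: (mulIf (x := beta a ^+ 2)); first by rewrite expf_neq0.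
  by rewrite e mul1r.
move=> hl; have [hsq hadj] := proj1 hl.
have c0 : 0 <= (n.+1%:R / 'C(N + n.+1 - 1, N)%:R * ((N + n.+1 - 1)%:R / N%:R) : C).
  by rewrite mulr_ge0 // divr_ge0 // ler0n.
have hpsd : psd (Cbeta n.+1 beta) by apply: psd_scale => //; apply: psd_proj.
have htr : ptrace_rest (Cbeta n.+1 beta) = 1%:M.
  rewrite /Cbeta ptrace_scale; apply/matrixP => i j; rewrite mxE ptrace_Ct hl mulr1 [RHS]mxE.
  have e1 : (N + n.+1 - 1 = N + n)%N by rewrite addnS subn1.
  have key : ((N + n) * 'C(N.-1 + n, N.-1) = N * 'C(N + n, N))%N.
    have := mul_bin_diag (N + n) N.-1; rewrite prednK //.
    by have -> : (N + n).-1 = (N.-1 + n)%N by lia.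
  have hC : 'C(N + n, N)%:R != 0 :> C by rewrite pnatr_eq0 -lt0n bin_gt0 leq_addr.
  have hNz : N%:R != 0 :> C by rewrite pnatr_eq0 -lt0n.
  have hd' : n.+1%:R != 0 :> C by rewrite pnatr_eq0.
  have k2 : (N + n)%:R * 'C(N.-1 + n, N.-1)%:R = N%:R * 'C(N + n, N)%:R :> C.
    by rewrite -!natrM key.
  rewrite e1.
  have -> : n.+1%:R / 'C(N + n, N)%:R * ((N + n)%:R / N%:R) *
            ((i == j)%:R * ('C(N.-1 + n, N.-1)%:R / n.+1%:R)) =
            (i == j)%:R * (((N + n)%:R * 'C(N.-1 + n, N.-1)%:R) / (N%:R * 'C(N + n, N)%:R)) :> C.
    by field; rewrite hC hNz -[1]/(1%:R) -natrD add1n hd'.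
  rewrite k2 divff ?mulf_neq0 // mulr1.
  by case: (i == j).
by split => //; split.
Qed.
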